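(* For the mechanism $\mathbb{M}_{\text{1-supply}}$ on a unit-supply two-sided market with XOS buyers, the expected sum of payments charged to the buyers equals $$\mathbb{E}\Big[\sum_{i\in[n]}\rho_i^B\Big]=\frac12\sum_{j\in L}p_j\,\Pr_{\mathbf v,Z}\big[j\notin\Lambda_{n+1}(\mathbf v,Z)\ \big|\ j\in Z\big].$$
   Context: Unit-supply two-sided market: buyers $[n]$, sellers $[k]$, seller $j$ owns only item $j$. Buyer valuations $v_i$ are monotone normalized XOS functions on $2^{[k]}$, drawn independently from public distributions $G_i$; seller values $w_j\ge0$ drawn independently from public distributions $F_j$. For XOS $v$ and $T\subseteq[k]$, $a(v,T,\cdot)$ is a fixed additive function with $a(v,T,T)=v(T)$, $a(v,T,S)\le v(S)$. $\mathbb{A}$ maps each buyer profile $\mathbf v$ to an allocation $X^{\mathbb A}(\mathbf v)$ of disjoint bundles to buyers. $\mathrm{SW}^B_j(\mathbf v)=a(v_i,X^{\mathbb A}_i(\mathbf v),\{j\})$ if $j\in X^{\mathbb A}_i(\mathbf v)$, else $0$. $L=\{j:\mathbb{E}[\mathrm{SW}^B_j(\mathbf v)]\ge4\mathbb{E}[w_j]\}$, $p_j=\frac12\mathbb{E}[\mathrm{SW}^B_j(\mathbf v)]$ for $j\in L$. $\mathbb{M}_{\text{1-supply}}$: for each $j\in L$, independently with probability $q_j=1/(2\Pr[w_j\le p_j])$ offer seller $j$ payment $p_j$; she accepts iff $w_j\le p_j$. $Z$ is the random set of items whose sellers received and accepted an offer; $\Lambda_1=Z$. Buyers $i=1,\dots,n$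 in turn pick $B_i\subseteq\Lambda_i$ maximizing $v_i(B_i)-\sum_{j\in B_i}p_j$, receive it and pay $\rho_i^B=\sum_{j\in B_i}p_j$, and $\Lambda_{i+1}=\Lambda_i\setminus B_i$. $\Lambda_{n+1}(\mathbf v,Z)$ is the set of accepted items bought by no buyer. *)

(* Defs.v *)
From HB Require Import structures.
From mathcomp Require Import all_boot all_order all_algebra.
From mathcomp Require Import all_classical all_reals all_analysis.
Set Implicit Arguments.
Unset Strict Implicit.
Unset Printing Implicit Defensive.
Import Order.TTheory GRing.Theory Num.Theory.
Local Open Scope ring_scope.

Definition is_XOS (R : realType) (k : nat) (v : {set 'I_k} -> R) : Prop :=
  v finset.set0 = 0 /\
  (forall S T : {set 'I_k}, S \subset T -> v S <= v T) /\
  exists (m : nat) (alpha : 'I_m.+1 -> 'I_k -> R),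
    (forall l j, 0 <= alpha l j) /\
    forall S : {set 'I_k},
      v S = \big[Num.max/0]_(l < m.+1) \sum_(j in S) alpha l j.

(** [a v T] is the additive function a(v,T,.) given by its item weights:
    a(v,T,S) = \sum_(j in S) a v T j. It supports v at T. *)
Definition supporting_clauses (R : realType) (k : nat)
  (a : ({set 'I_k} -> R) -> {set 'I_k} -> 'I_k -> R) : Prop :=
  forall v, is_XOS v -> forall T : {set 'I_k},
    \sum_(j in T) a v T j = v T /\
    forall S : {set 'I_k}, \sum_(j in S) a v T j <= v S.

Definition disjoint_allocation (R : realType) (n k : nat)
  (A : ('I_n -> {set 'I_k} -> R) -> 'I_n -> {set 'I_k}) : Prop :=
  forall vv i i', i != i' -> [disjoint A vv i & A vv i'].

(** SW^B_j(v) = a(v_i, X_i, {j}) if j \in X_i (unique by disjointness), else 0. *)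
Definition SWB (R : realType) (n k : nat)
  (a : ({set 'I_k} -> R) -> {set 'I_k} -> 'I_k -> R)
  (A : ('I_n -> {set 'I_k} -> R) -> 'I_n -> {set 'I_k})
  (vv : 'I_n -> {set 'I_k} -> R) (j : 'I_k) : R :=
  \sum_(i < n) (if j \in A vv i then a (vv i) (A vv i) j else 0).

Definition best_response (R : realType) (n k : nat) (p : 'I_k -> R)
  (choice : 'I_n -> ({set 'I_k} -> R) -> {set 'I_k} -> {set 'I_k}) : Prop :=
  forall i u (Lam : {set 'I_k}),
    choice i u Lam \subset Lam /\
    forall B : {set 'I_k}, B \subset Lam ->
      u B - \sum_(j in B) p j <= u (choice i u Lam) - \sum_(j in choice i u Lam) p j.

(** [avail choice vv Z m] = Lambda_{m+1}: items still available after buyers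
    0, ..., m-1 (0-indexed) have picked, starting from Lambda_1 = Z. *)
Fixpoint avail (R : realType) (n k : nat)
  (choice : 'I_n -> ({set 'I_k} -> R) -> {set 'I_k} -> {set 'I_k})
  (vv : 'I_n -> {set 'I_k} -> R) (Z : {set 'I_k}) (m : nat) : {set 'I_k} :=
  match m with
  | 0 => Z
  | m'.+1 =>
      let Lam := avail choice vv Z m' in
      match (insub m' : option 'I_n) with
      | Some i => Lam :\: choice i (vv i) Lam
      | None => Lam
      end
  end.

Definition bundle (R : realType) (n k : nat)
  (choice : 'I_n -> ({set 'I_k} -> R) -> {set 'I_k} -> {set 'I_k})
  (vv : 'I_n -> {set 'I_k} -> R) (Z : {set 'I_k}) (i : 'I_n) : {set 'I_k} :=
  choice i (vv i) (avail choice vv Z i).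

Definition buyer_payments (R : realType) (n k : nat) (p : 'I_k -> R)
  (choice : 'I_n -> ({set 'I_k} -> R) -> {set 'I_k} -> {set 'I_k})
  (vv : 'I_n -> {set 'I_k} -> R) (Z : {set 'I_k}) : R :=
  \sum_(i < n) \sum_(j in bundle choice vv Z i) p j.

Local Open Scope classical_set_scope.

(** Events generated by a random element X : Omega -> T (sigma(X) w.r.t.
    the final sigma-algebra on T). *)
Definition gen_events d (Omega : measurableType d) (T : Type) (X : Omega -> T)
  : set (set Omega) :=
  [set E | measurable E /\ exists B : set T, E = X @^-1` B].

Definition mutually_independent d (Omega : measurableType d) (R : realType)
  (P : probability Omega R) (I : finType) (E : I -> set (set Omega)) : Prop :=
  forall (J : {set I}) (F : I -> set Omega),
    (forall i, i \in J -> E i (F i)) ->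
    P (\big[setI/setT]_(i in J) F i) = (\prod_(i in J) P (F i))%E.

Definition condprob d (Omega : measurableType d) (R : realType)
  (P : probability Omega R) (A B : set Omega) : R :=
  fine (P (A `&` B)) / fine (P B).

(* Main.v *)
Require Import Defs.
From HB Require Import structures.
From mathcomp Require Import all_boot all_order all_algebra.
From mathcomp Require Import all_classical all_reals all_analysis.
From mathcomp Require Import ring lra.
Import Order.TTheory GRing.Theory Num.Theory.
Local Open Scope ring_scope.
Local Open Scope classical_set_scope.

Lemma avail_sub (R : realType) n k (choice : 'I_n -> ({set 'I_k} -> R) -> {set 'I_k} -> {set 'I_k}) (vv : 'I_n -> {set 'I_k} -> R) (Zs : {set 'I_k}) m :
  (forall i u Lam, choice i u Lam \subset Lam) ->
  avail choice vv Zs m \subset Zs.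
Proof.
move=> hc; elim: m => [|m IH] /=; first exact: subxx.
case: insubP => [i _ _|_] //.
by rewrite (fintype.subset_trans _ IH) // subsetDl.
Qed.

Lemma pay_eq (R : realType) n k (p : 'I_k -> R) (choice : 'I_n -> ({set 'I_k} -> R) -> {set 'I_k} -> {set 'I_k})
  (vv : 'I_n -> {set 'I_k} -> R) (Zs : {set 'I_k}) :
  (forall i u Lam, choice i u Lam \subset Lam) ->
  buyer_payments p choice vv Zs =
  \sum_(j < k) (if (j \in Zs) && (j \notin avail choice vv Zs n) then p j else 0).
Proof.
move=> hc.
pose G (m : nat) := if (insub m : option 'I_n) is Some i then
   \sum_(j in bundle choice vv Zs i) p j else 0.
have -> : buyer_payments p choice vv Zs = \sum_(0 <= m < n) G m.
  rewrite big_mkord /buyer_payments; apply: eq_bigr => i _.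
  by rewrite /G valK.
suff H : forall m, (m <= n)%N -> \sum_(0 <= i < m) G i =
  \sum_(j < k) (if (j \in Zs) && (j \notin avail choice vv Zs m) then p j else 0).
  exact: H.
elim => [|m IH] hm.
  rewrite big_nil; symmetry; apply: big1 => j _.
  by rewrite /= andbN.
rewrite big_nat_recr //= IH ?(ltnW hm) //.
rewrite /G /= insubT /= /bundle /=.
rewrite (big_mkcond (fun j => j \in _)) -big_split /=.
apply: eq_bigr => j _.
set L := avail choice vv Zs m.
have hLZ : L \subset Zs by apply: avail_sub.
set C := choice _ _ L.
have hCL : C \subset L by apply: hc.
rewrite inE negb_and negbK.
case hC : (j \in C).
  have hL : j \in L := fintype.subsetP hCL j hC.
  have hZ : j \in Zs := fintype.subsetP hLZ j hL.
  by rewrite hZ hL /= add0r.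
by rewrite addr0.
Qed.

Theorem proposition2
  (R : realType) (d : measure_display) (Omega : measurableType d)
  (P : probability Omega R) (n k : nat)
  (a : ({set 'I_k} -> R) -> {set 'I_k} -> 'I_k -> R)
  (A : ('I_n -> {set 'I_k} -> R) -> 'I_n -> {set 'I_k})
  (v : 'I_n -> Omega -> {set 'I_k} -> R)   (* buyer valuations v_i ~ G_i *)
  (w : 'I_k -> Omega -> R)                 (* seller values w_j ~ F_j *)
  (c : 'I_k -> Omega -> bool)              (* mechanism's offer coins *)
  (choice : 'I_n -> ({set 'I_k} -> R) -> {set 'I_k} -> {set 'I_k}) :
  let SW (j : 'I_k) (om : Omega) := SWB a A (fun i => v i om) j in
  let inL (j : 'I_k) := (4%:E * 'E_P[w j] <= 'E_P[SW j])%E in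
  let p (j : 'I_k) := fine ('E_P[SW j])%E / 2 in
  let q (j : 'I_k) := (2 * fine (P [set om | w j om <= p j]))^-1 in
  let Z (om : Omega) : {set 'I_k} := [set j | inL j && c j om && (w j om <= p j)]%SET in
  let Lam_end (om : Omega) := avail choice (fun i => v i om) (Z om) n in
  supporting_clauses a ->
  disjoint_allocation A ->
  (forall i om, is_XOS (v i om)) ->
  (forall j om, 0 <= w j om) ->
  (forall j, measurable_fun setT (w j)) ->
  (forall j, measurable [set om | c j om]) ->
  mutually_independent P
    (fun x : 'I_n + 'I_k + 'I_k =>
       match x with
       | inl (inl i) => gen_events (v i)
       | inl (inr j) => gen_events (w j)
       | inr j => gen_events (c j)
       end) ->
  (forall j, inL j -> P [set om | c j om] = (q j)%:E) ->
  (forall j, P.-integrable setT (fun om => (SW j om)%:E)) ->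
  best_response p choice ->
  (forall j, measurable [set om | j \in Lam_end om]) ->
  ('E_P[fun om => buyer_payments p choice (fun i => v i om) (Z om)])%E =
  ((1 / 2) * \sum_(j < k | inL j)
      p j * condprob P [set om | j \notin Lam_end om] [set om | j \in Z om])%:E.
Proof.
move=> SW inL p q Z Lam_end hsup hdis hxos hw0 hwm hcm hind hq hint hbr hlam.
have hc : forall i u Lam, choice i u Lam \subset Lam by move=> i u Lam; case: (hbr i u Lam).
pose B j := [set om | j \in Z om].
pose S j := B j `&` [set om | j \notin Lam_end om].
have mwle : forall j, measurable [set om | w j om <= p j].
  move=> j; have := hwm j measurableT _ (measurable_itv (Interval -oo%O (BRight (p j)))).
  by rewrite setTI; congr measurable; apply/seteqP; split => x /=; rewrite in_itv /=.
have hB : forall j, B j = if inL j then [set om | c j om] `&` [set om | w j om <= p j] else set0.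
  move=> j; apply/seteqP; split => x; rewrite /B /Z /= inE; case: (inL j) => //=.
  - by case/andP => -> ->.
  - by case=> -> ->.
have mB : forall j, measurable (B j).
  by move=> j; rewrite hB; case: (inL j) => //; apply: measurableI.
have mS : forall j, measurable (S j).
  move=> j; apply: measurableI => //.
  rewrite (_ : [set _ | _] = ~` [set om | j \in Lam_end om]); first exact: measurableC.
  by apply/seteqP; split => x /=; case: (j \in Lam_end x).
have hpay : forall om, buyer_payments p choice (fun i => v i om) (Z om) =
    \sum_(j < k) p j * \1_(S j) om.
  move=> om; rewrite pay_eq //; apply: eq_bigr => j _.
  rewrite indicE.
  have -> : (om \in S j) = (j \in Z om) && (j \notin Lam_end om).
    by rewrite /S /B in_setI; congr andb; apply/idP/idP => [/set_mem|H] //; exact: mem_set.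
  by case: ifP => _; rewrite ?mulr1 ?mulr0.
rewrite expectation.unlock.
under eq_integral => om _ do rewrite hpay -sumEFin.
rewrite integral_sum //; last first.
  move=> j; under eq_fun do rewrite EFinM.
  by apply: integrableZl => //; exact: integrable_indic.
under eq_bigr => j _ do under eq_integral => x _ do rewrite EFinM.
have hI : forall j, (\int[P]_x ((p j)%:E * (\1_(S j) x)%:E) = (p j)%:E * P (S j))%E.
  by move=> j; rewrite integralZl ?integral_indic ?setIT //; exact: integrable_indic.
under eq_bigr => j _ do rewrite hI.
have hfin j : P (S j) = (fine (P (S j)))%:E by rewrite fineK // fin_num_measure.
under eq_bigr => j _ do rewrite hfin -EFinM.
rewrite sumEFin; congr EFin.
rewrite mulr_sumr [RHS]big_mkcond /=; apply: eq_bigr => j _.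
case hj : (inL j); last first.
  have -> : S j = set0 by rewrite /S hB hj set0I.
  by rewrite measure0 /= !mulr0.
rewrite /condprob /S setIC.
set Aj := [set om | j \notin Lam_end om].
have hBj : B j = [set om | w j om <= p j] `&` [set om | c j om].
  by rewrite hB hj setIC.
have hPB : P (B j) = (fine (P [set om | w j om <= p j]) * q j)%:E.
  have := hind ([set inl (inr j); inr j])%SET
    (fun x => if x is inr _ then [set om | c j om] else [set om | w j om <= p j]).
  rewrite big_setU1 ?big_set1 ?inE //= big_setU1 ?big_set1 ?inE //=.
  rewrite -hBj => ->; last first.
    move=> x; rewrite !inE => /orP [/eqP -> | /eqP ->] /=.
    - split; first exact: mwle.
      by exists [set r | r <= p j].
    - split; first exact: hcm.
      exists [set true]; apply/seteqP; split => y /=; by [].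
  by rewrite hq // EFinM fineK ?fin_num_measure.
rewrite hPB /=.
have [r0|r0] := eqVneq (fine (P [set om | w j om <= p j])) 0.
  have -> : P (Aj `&` B j) = 0%E.
    apply: (subset_measure0 (A:=Aj `&` B j) (B:=B j)).
    - by rewrite setIC; exact: mS.
    - exact: mB.
    - exact: subIsetr.
    - by move: hPB; rewrite r0 mul0r.
  by rewrite /= !(mulr0, mul0r).
rewrite /q.
field.
by rewrite r0.
Qed.
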